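(* For every integer $\ell\ge 1$, the graph $H_\ell$ is $3$-regular, planar, $2$-edge-connected, and has $2^{\ell+1}+2^\ell-2$ vertices.
   Context: For an integer $\ell\ge 1$, $H_\ell$ is the graph with vertex set $V_\ell=\{v_{h,j} : h\in\{-\ell,\dots,\ell\},\ j\in\{1,\dots,2^{\ell-|h|}\}\}$ and with the following edges: (1) $v_{h,j}v_{h-1,2j-1}$ and $v_{h,j}v_{h-1,2j}$ for every $h\in\{1,\dots,\ell\}$ and $j\in\{1,\dots,2^{\ell-h}\}$; (2) $v_{h,j}v_{h+1,2j-1}$ and $v_{h,j}v_{h+1,2j}$ for every $h\in\{-\ell,\dots,-1\}$ and $j\in\{1,\dots,2^{\ell-|h|}\}$; (3) the edge $v_{\ell,1}v_{-\ell,1}$; (4) the edges $v_{0,2j-1}v_{0,2j}$ for every $j\in\{1,\dots,2^{\ell-1}\}$. *)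

(* Defs.v *)
From Stdlib Require Import Reals.
From mathcomp Require Import all_boot.

Set Implicit Arguments.
Unset Strict Implicit.
Unset Printing Implicit Defensive.

Definition cubic (T : finType) (e : rel T) : Prop :=
  forall x : T, #|[set y | e x y]| = 3.

Definition connectedg (T : finType) (e : rel T) : Prop :=
  forall x y : T, connect e x y.

Definition remove_edge (T : finType) (e : rel T) (a b : T) : rel T :=
  [rel x y | e x y && ~~ (((x == a) && (y == b)) || ((x == b) && (y == a)))].

Definition two_edge_connected (T : finType) (e : rel T) : Prop :=
  1 < #|T| /\ connectedg e /\
  forall a b : T, e a b -> connectedg (remove_edge e a b).

Definition point := (R * R)%type.

Definition cont_on01 (g : R -> point) : Prop :=
  forall t : R, (Rle R0 t /\ Rle t R1) ->
  forall eps : R, Rlt R0 eps -> exists delta : R, Rlt R0 delta /\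
    forall s : R, (Rle R0 s /\ Rle s R1) -> Rlt (Rabs (Rminus s t)) delta ->
      Rlt (Rabs (Rminus (fst (g s)) (fst (g t)))) eps /\
      Rlt (Rabs (Rminus (snd (g s)) (snd (g t)))) eps.

Definition injective_on01 (g : R -> point) : Prop :=
  forall s t : R, (Rle R0 s /\ Rle s R1) -> (Rle R0 t /\ Rle t R1) -> g s = g t -> s = t.

Definition jordan_arc (g : R -> point) : Prop :=
  cont_on01 g /\ injective_on01 g.

Definition planar (T : finType) (e : rel T) : Prop :=
  exists (pos : T -> point) (arc : T -> T -> R -> point),
    injective pos /\
    (forall x y : T, e x y ->
       jordan_arc (arc x y) /\ arc x y R0 = pos x /\ arc x y R1 = pos y) /\
    (forall (x y z : T) (t : R), e x y -> (Rlt R0 t /\ Rlt t R1) -> arc x y t <> pos z) /\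
    (forall (x y u v : T) (s t : R), e x y -> e u v ->
       ~ ((x = u /\ y = v) \/ (x = v /\ y = u)) ->
       (Rlt R0 s /\ Rlt s R1) -> (Rlt R0 t /\ Rlt t R1) -> arc x y s <> arc u v t).

(* Vertex v_{h,j} (h in -l..l, j in 1..2^(l-|h|)) is encoded as the pair *)
(* (i, j0) with i = h + l in 0..2l and j0 = j - 1 in 0..2^(l-|h|)-1.     *)

Definition habs (i l : nat) : nat := (i - l) + (l - i).

Definition Hvtx (l : nat) :=
  {p : 'I_(2 * l + 1) * 'I_(2 ^ l) | (p.2 : nat) < 2 ^ (l - habs p.1 l)}.

Definition hlev (l : nat) (x : Hvtx l) : nat := (val x).1.
Definition hidx (l : nat) (x : Hvtx l) : nat := (val x).2.

(* the edges as listed in the definition, each listed from one endpoint *)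
Definition Hdedge (l : nat) (x y : Hvtx l) : bool :=
  let i := hlev x in let j := hidx x in
  let i' := hlev y in let j' := hidx y in
  [|| (* (1): h >= 1, v_{h,j} -- v_{h-1,2j-1}, v_{h-1,2j} *)
      [&& l < i, i' == i.-1 & ((j' == 2 * j) || (j' == 2 * j + 1))],
      (* (2): h <= -1, v_{h,j} -- v_{h+1,2j-1}, v_{h+1,2j} *)
      [&& i < l, i' == i.+1 & ((j' == 2 * j) || (j' == 2 * j + 1))],
      (* (3): v_{l,1} -- v_{-l,1} *)
      [&& i == 2 * l, j == 0, i' == 0 & j' == 0]
    | (* (4): v_{0,2j-1} -- v_{0,2j} *)
      [&& i == l, i' == l, ~~ odd j & j' == j.+1]].

Definition Hadj (l : nat) : rel (Hvtx l) :=
  [rel x y | Hdedge x y || Hdedge y x].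

(* Main.v *)
Require Import Defs.
From Stdlib Require Import Reals.
From mathcomp Require Import all_boot.
From Stdlib Require Import Lra Psatz.
From mathcomp Require Import zify.

Set Implicit Arguments.
Unset Strict Implicit.
Unset Printing Implicit Defensive.



Definition dN (l i j i' j' : nat) : bool :=
  [|| [&& l < i, i' == i.-1 & ((j' == 2 * j) || (j' == 2 * j + 1))],
      [&& i < l, i' == i.+1 & ((j' == 2 * j) || (j' == 2 * j + 1))],
      [&& i == 2 * l, j == 0, i' == 0 & j' == 0]
    | [&& i == l, i' == l, ~~ odd j & j' == j.+1]].

Lemma Hadj_N l (x y : Hvtx l) : Hadj x y = dN l (hlev x) (hidx x) (hlev y) (hidx y) || dN l (hlev y) (hidx y) (hlev x) (hidx x).
Proof. by []. Qed.

Definition edgeP l i j i' j' : Prop :=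
  (i' = i.+1 /\ ((i < l /\ j = j' %/ 2) \/ (l <= i /\ j' = j %/ 2)))
  \/ (i = i'.+1 /\ ((i' < l /\ j' = j %/ 2) \/ (l <= i' /\ j = j' %/ 2)))
  \/ (i = l /\ i' = l /\ j %/ 2 = j' %/ 2 /\ j <> j')
  \/ (i = 2*l /\ i' = 0 /\ j = 0 /\ j' = 0) \/ (i = 0 /\ i' = 2*l /\ j = 0 /\ j' = 0).

Lemma dN_edgeP l i j i' j' : 1 <= l ->
  (dN l i j i' j' || dN l i' j' i j) <-> edgeP l i j i' j'.
Proof.
rewrite /dN /edgeP => hl; split.
- case/orP=> /or4P[] H.
  + right; left; split; [lia| right; lia].
  + left; split; [lia| left; lia].
  + do 3 right; left; lia.
  + do 2 right; left; lia.
  + left; split; [lia| right; lia].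
  + right; left; split; [lia| left; lia].
  + do 4 right; lia.
  + do 2 right; left; lia.
- case=> [[h1 [[h2 h3]|[h2 h3]]]|[[h1 [[h2 h3]|[h2 h3]]]|[[h1 [h2 [h3 h4]]]|[[h1 [h2 [h3 h4]]]|[h1 [h2 [h3 h4]]]]]]].
  + apply/orP; left; apply/or4P; apply: Or42; apply/and3P; split; lia.
  + apply/orP; right; apply/or4P; apply: Or41; apply/and3P; split; lia.
  + apply/orP; right; apply/or4P; apply: Or42; apply/and3P; split; lia.
  + apply/orP; left; apply/or4P; apply: Or41; apply/and3P; split; lia.
  + case Ho: (odd j).
    * apply/orP; right; apply/or4P; apply: Or44; apply/and4P; split; lia.
    * apply/orP; left; apply/or4P; apply: Or44; apply/and4P; split; lia.
  + apply/orP; left; apply/or4P; apply: Or43; apply/and4P; split; lia.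
  + apply/orP; right; apply/or4P; apply: Or43; apply/and4P; split; lia.
Qed.

Definition P2 l i := 2 ^ (l - habs i l).

Lemma vbound l (x : Hvtx l) : hlev x <= 2 * l /\ hidx x < P2 l (hlev x).
Proof.
case: x => [[i j] /= H]; rewrite /hlev /hidx /P2 /=; split => //.
by have := ltn_ord i; lia.
Qed.

Lemma vtx_eq l (x y : Hvtx l) : hlev x = hlev y -> hidx x = hidx y -> x = y.
Proof.
case: x y => [[i j] Hx] [[i' j'] Hy]; rewrite /hlev /hidx /= => e1 e2.
apply: val_inj => /=; congr pair; exact: val_inj.
Qed.

Lemma P2_le l i : P2 l i <= 2 ^ l.
Proof. by apply: leq_pexp2l => //; apply: leq_subr. Qed.

Lemma mkv l i j : i <= 2 * l -> j < P2 l i -> exists y : Hvtx l, hlev y = i /\ hidx y = j.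
Proof.
move=> hi hj.
have hi' : i < 2 * l + 1 by rewrite addn1 ltnS.
have hj' : j < 2 ^ l by apply: leq_trans hj (P2_le l i).
exists (exist _ (Ordinal hi', Ordinal hj') hj); by [].
Qed.

Lemma P2_up l i : i < l -> P2 l i.+1 = 2 * P2 l i.
Proof.
move=> h; rewrite /P2.
have ->: l - habs i.+1 l = (l - habs i l).+1 by rewrite /habs; lia.
by rewrite expnS.
Qed.

Lemma P2_down l i : l <= i -> i < 2 * l -> P2 l i = 2 * P2 l i.+1.
Proof.
move=> h1 h2; rewrite /P2.
have ->: l - habs i l = (l - habs i.+1 l).+1 by rewrite /habs; lia.
by rewrite expnS.
Qed.

Lemma P2_0 l : P2 l 0 = 1.
Proof. by rewrite /P2 /habs; have ->: l - ((0 - l) + (l - 0)) = 0 by lia. Qed.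

Lemma P2_top l : P2 l (2 * l) = 1.
Proof. by rewrite /P2 /habs; have ->: l - ((2 * l - l) + (l - 2 * l)) = 0 by lia. Qed.

Lemma P2_pos l i : 0 < P2 l i.
Proof. by rewrite /P2 expn_gt0. Qed.

Lemma Hadj_E l (x y : Hvtx l) : 1 <= l ->
  Hadj x y <-> edgeP l (hlev x) (hidx x) (hlev y) (hidx y).
Proof. move=> hl; rewrite Hadj_N; exact: dN_edgeP. Qed.

Lemma Hadj_sym l : symmetric (@Hadj l).
Proof. by move=> x y; rewrite /Hadj /= orbC. Qed.


Definition nb l i j : seq (nat * nat) :=
  if i == 0 then [:: (1, 0); (1, 1); (2 * l, 0)]
  else if i < l then [:: (i.-1, j %/ 2); (i.+1, 2 * j); (i.+1, 2 * j + 1)]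
  else if i == l then [:: (l.-1, j %/ 2); (l.+1, j %/ 2); (l, if odd j then j.-1 else j.+1)]
  else if i < 2 * l then [:: (i.+1, j %/ 2); (i.-1, 2 * j); (i.-1, 2 * j + 1)]
  else [:: (i.-1, 0); (i.-1, 1); (0, 0)].

Ltac destrE H := case: H => [[? [[? ?]|[? ?]]]|[[? [[? ?]|[? ?]]]|[[? [? [? ?]]]|[[? [? [? ?]]]|[? [? [? ?]]]]]]].

Ltac solveE := rewrite /edgeP; first
  [ left; split; [lia| first [left; lia | right; lia]]
  | right; left; split; [lia | first [left; lia|right; lia]]
  | do 2 right; left; lia | do 3 right; left; lia | do 4 right; lia ].

Lemma nb_spec l i j i' j' : 1 <= l -> i <= 2 * l -> i' <= 2 * l ->
  (i = 0 -> j = 0) -> (i = 2 * l -> j = 0) -> (i' = 0 -> j' = 0) -> (i' = 2 * l -> j' = 0) ->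
  edgeP l i j i' j' <-> (i', j') \in nb l i j.
Proof.
move=> hl hi hi' h1 h2 h3 h4; rewrite /nb.
case: ifP => [/eqP e0|n0].
  have j0 := h1 e0; subst i j; rewrite !inE !xpair_eqE; split.
  - move=> H; destrE H; lia.
  - by case/or3P => /andP[/eqP-> /eqP->]; solveE.
case: ifP => [lt0|n1].
  rewrite !inE !xpair_eqE; split.
  - move=> H; destrE H; lia.
  - by case/or3P => /andP[/eqP-> /eqP->]; solveE.
case: ifP => [/eqP el|n2].
  subst i; case Ho: (odd j); rewrite !inE !xpair_eqE; split.
  - move=> H; destrE H; lia.
  - by case/or3P => /andP[/eqP-> /eqP->]; solveE.
  - move=> H; destrE H; lia.
  - by case/or3P => /andP[/eqP-> /eqP->]; solveE.
case: ifP => [lt2|n3].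
  rewrite !inE !xpair_eqE; split.
  - move=> H; destrE H; lia.
  - by case/or3P => /andP[/eqP-> /eqP->]; solveE.
have ei : i = 2 * l by lia.
have j0 := h2 ei; subst i j; rewrite !inE !xpair_eqE; split.
  - move=> H; destrE H; lia.
  - by case/or3P => /andP[/eqP-> /eqP->]; solveE.
Qed.

Lemma nb_valid l i j p : 1 <= l -> i <= 2 * l -> j < P2 l i -> p \in nb l i j ->
  p.1 <= 2 * l /\ p.2 < P2 l p.1.
Proof.
move=> hl hi hj; rewrite /nb.
case: ifP => [/eqP e0|n0].
  subst i; rewrite P2_0 in hj.
  have e1 : P2 l 1 = 2 by rewrite (P2_up (i:=0)) ?P2_0.
  by rewrite !inE => /or3P[]/eqP->/=; rewrite ?e1 ?P2_top; lia.
case: ifP => [lt0|n1].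
  have e1 := P2_up lt0.
  have e2 : P2 l i = 2 * P2 l i.-1 by rewrite -(P2_up (i:=i.-1)); [congr P2; lia|lia].
  by rewrite !inE => /or3P[]/eqP->/=; rewrite ?e1 ?e2 in hj *; lia.
case: ifP => [/eqP el|n2].
  subst i.
  have e1 : P2 l l = 2 * P2 l l.+1 by apply: P2_down; lia.
  have e2 : P2 l l = 2 * P2 l l.-1 by rewrite -(P2_up (i:=l.-1)); [congr P2; lia|lia].
  rewrite !inE => /or3P[]/eqP->/=.
  - split; first lia. rewrite e2 in hj; lia.
  - split; first lia. rewrite e1 in hj; lia.
  - split; first lia. rewrite e1 in hj *; case: ifP => Ho; lia.
case: ifP => [lt2|n3].
  have e1 : P2 l i = 2 * P2 l i.+1 by apply: P2_down; lia.
  have e2 : P2 l i.-1 = 2 * P2 l i by rewrite (P2_down (i:=i.-1)); [congr (2 * P2 l _); lia|lia|lia].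
  by rewrite !inE => /or3P[]/eqP->/=; rewrite ?e1 ?e2 in hj *; lia.
have ei : i = 2 * l by lia.
subst i.
have e2 : P2 l (2 * l).-1 = 2 by rewrite (P2_down (i:=(2 * l).-1)); [rewrite prednK ?P2_top; lia|lia|lia].
by rewrite !inE => /or3P[]/eqP->/=; rewrite ?e2 ?P2_0; lia.
Qed.

Lemma nb_uniq l i j : 1 <= l -> i <= 2 * l -> uniq (nb l i j).
Proof.
move=> hl hi; rewrite /nb.
case: ifP => [/eqP e0|n0]; first by rewrite /= !inE !xpair_eqE; lia.
case: ifP => [lt0|n1]; first by rewrite /= !inE !xpair_eqE; lia.
case: ifP => [/eqP el|n2]; first by case: ifP => Ho; rewrite /= !inE !xpair_eqE; lia.
case: ifP => [lt2|n3]; first by rewrite /= !inE !xpair_eqE; lia.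
by rewrite /= !inE !xpair_eqE; lia.
Qed.

Lemma card_L l (L : seq (nat * nat)) : uniq L ->
  (forall p, p \in L -> p.1 <= 2 * l /\ p.2 < P2 l p.1) ->
  #|[set y : Hvtx l | (hlev y, hidx y) \in L]| = size L.
Proof.
move=> uL vL.
set A := [set y : Hvtx l | (hlev y, hidx y) \in L].
set f := fun y : Hvtx l => (hlev y, hidx y).
have finj : injective f.
  move=> x y [e1 e2]; exact: vtx_eq.
rewrite cardE -(size_map f); apply: perm_size; apply: uniq_perm.
- by rewrite (map_inj_uniq finj) enum_uniq.
- exact: uL.
- move=> [a b]; apply/idP/idP.
  + by case/mapP => y; rewrite mem_enum inE => hy ->.
  + move=> hab; have [h1 h2] := vL _ hab.
    have [y [ey1 ey2]] := mkv h1 h2.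
    apply/mapP; exists y; last by rewrite /f ey1 ey2.
    by rewrite mem_enum inE /f ey1 ey2.
Qed.

Lemma cubicH l : 1 <= l -> cubic (@Hadj l).
Proof.
move=> hl x.
have [hx1 hx2] := vbound x.
have -> : [set y | Hadj x y] = [set y : Hvtx l | (hlev y, hidx y) \in nb l (hlev x) (hidx x)].
  apply/setP => y; rewrite !inE.
  have [hy1 hy2] := vbound y.
  have z1 : forall z : Hvtx l, hlev z = 0 -> hidx z = 0.
    by move=> z hz; have [_ ] := vbound z; rewrite hz P2_0; lia.
  have z2 : forall z : Hvtx l, hlev z = 2 * l -> hidx z = 0.
    by move=> z hz; have [_ ] := vbound z; rewrite hz P2_top; lia.
  apply/idP/idP.
  - by move/(Hadj_E _ _ hl)/(nb_spec hl hx1 hy1 (z1 x) (z2 x) (z1 y) (z2 y)).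
  - by move/(nb_spec hl hx1 hy1 (z1 x) (z2 x) (z1 y) (z2 y))/(Hadj_E _ _ hl).
rewrite card_L ?nb_uniq //; last by move=> p; apply: nb_valid.
rewrite /nb; repeat case: ifP => _ //.
Qed.

Lemma sum_lt n K : \sum_(j < n | j < K) 1 = minn n K.
Proof.
rewrite big_mkcond /=; elim: n => [|n IH]; first by rewrite big_ord0 min0n.
by rewrite big_ord_recr /= IH; case: ifP => h; lia.
Qed.

Lemma S1 l m : m <= l -> \sum_(i < m) P2 l i = 2 ^ m - 1.
Proof.
elim: m => [|m IH] hm; first by rewrite big_ord0.
rewrite big_ord_recr /= IH; last lia.
have -> : P2 l m = 2 ^ m by rewrite /P2 /habs; congr (2 ^ _); lia.
have := expn_gt0 2 m; rewrite expnS; lia.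
Qed.

Lemma S2 l k : k <= l -> \sum_(i < l + 1 + k) P2 l i = 2 ^ l.+1 - 1 + 2 ^ l - 2 ^ (l - k).
Proof.
elim: k => [|k IH] hk.
  rewrite addn0 addn1 big_ord_recr /= S1 //.
  have -> : P2 l l = 2 ^ l by rewrite /P2 /habs; congr (2 ^ _); lia.
  rewrite subn0 expnS; have := expn_gt0 2 l; lia.
rewrite addnS big_ord_recr /= IH; last lia.
have -> : P2 l (l + 1 + k) = 2 ^ (l - k.+1) by rewrite /P2 /habs; congr (2 ^ _); lia.
have e : 2 ^ (l - k) = 2 * 2 ^ (l - k.+1) by rewrite -expnS; congr (2 ^ _); lia.
have le1 : 2 ^ (l - k) <= 2 ^ l by apply: leq_pexp2l => //; lia.
rewrite e in le1 *; rewrite expnS in le1 *; lia.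
Qed.

Lemma cardH l : 1 <= l -> #|{: Hvtx l}| = 2 ^ l.+1 + 2 ^ l - 2.
Proof.
move=> hl.
have -> : #|{: Hvtx l}| = \sum_(i < 2 * l + 1) \sum_(j < 2 ^ l | j < P2 l i) 1.
  rewrite pair_big_dep /= card_sig -sum1_card; apply: eq_bigl => -[i j]; by rewrite inE.
under eq_bigr => i _ do rewrite sum_lt (minn_idPr (P2_le l i)).
have e : 2 * l + 1 = l + 1 + l by lia.
rewrite e S2 // subnn expn0 expnS; have := expn_gt0 2 l; lia.
Qed.

Definition treeRel l lo hi : rel (Hvtx l) := [rel u v | Hadj u v &&
  [&& lo <= hlev u, lo <= hlev v, hlev u <= hi, hlev v <= hi &
      (hlev u == (hlev v).+1) || (hlev v == (hlev u).+1)]].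
Arguments treeRel : clear implicits.

Lemma conn_mono (T : finType) (e e' : rel T) : (forall u v, e u v -> e' u v) ->
  forall x y, connect e x y -> connect e' x y.
Proof. move=> h; apply: connect_sub => u v /h; exact: connect1. Qed.

Lemma tree_mono l lo hi lo' hi' : lo' <= lo -> hi <= hi' ->
  forall x y, connect (treeRel l lo hi) x y -> connect (treeRel l lo' hi') x y.
Proof.
move=> h1 h2; apply: conn_mono => u v /andP[H /and5P[a b c d e]].
apply/andP; split => //; apply/and5P; split => //; lia.
Qed.

Lemma lev0 l (x y : Hvtx l) : hlev x = 0 -> hlev y = 0 -> x = y.
Proof.
move=> hx hy; apply: vtx_eq; first by rewrite hx hy.
have [_ ] := vbound x; have [_ ] := vbound y; rewrite hx hy P2_0; lia.
Qed.

Lemma levtop l (x y : Hvtx l) : hlev x = 2 * l -> hlev y = 2 * l -> x = y.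
Proof.
move=> hx hy; apply: vtx_eq; first by rewrite hx hy.
have [_ ] := vbound x; have [_ ] := vbound y; rewrite hx hy P2_top; lia.
Qed.

Lemma up l n : 1 <= l -> forall x y : Hvtx l, hlev x + n = 2 * l -> l <= hlev x ->
  hlev y = 2 * l -> connect (treeRel l (hlev x) (2 * l)) x y.
Proof.
move=> hl; elim: n => [|n IH] x y hx hlx hy.
  by rewrite (levtop (x:=x) (y:=y)) ?connect0 //; lia.
have [hx1 hx2] := vbound x.
have hP := P2_down (i := hlev x) hlx ltac:(lia).
have [p [hp1 hp2]] := mkv (l:=l) (i := (hlev x).+1) (j := hidx x %/ 2) ltac:(lia) ltac:(lia).
have step : treeRel l (hlev x) (2 * l) x p.
  apply/andP; split.
    by apply/(Hadj_E _ _ hl); rewrite hp1 hp2; left; split => //; right; lia.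
  rewrite /= hp1; lia.
apply: connect_trans (connect1 step) _.
apply: (@tree_mono l (hlev p) (2 * l)); [lia|lia|].
apply: IH => //; lia.
Qed.

Lemma down l n : 1 <= l -> forall x y : Hvtx l, hlev x = n -> n <= l ->
  hlev y = 0 -> connect (treeRel l 0 n) x y.
Proof.
move=> hl; elim: n => [|n IH] x y hx hn hy.
  by rewrite (lev0 (x:=x) (y:=y)) ?connect0.
have [hx1 hx2] := vbound x.
have hP := P2_up (l:=l) (i := n) ltac:(lia).
rewrite hx hP in hx2.
have [p [hp1 hp2]] := mkv (l:=l) (i := n) (j := hidx x %/ 2) ltac:(lia) ltac:(lia).
have step : treeRel l 0 n.+1 x p.
  apply/andP; split.
    by apply/(Hadj_E _ _ hl); rewrite hp1 hp2 hx; right; left; split => //; left; lia.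
  rewrite /= hp1 hx; lia.
apply: connect_trans (connect1 step) _.
apply: (@tree_mono l 0 n); [lia|lia|].
apply: IH => //; lia.
Qed.

Lemma desc l n : 1 <= l -> forall x : Hvtx l, hlev x = l + n -> n <= l ->
  exists2 w : Hvtx l, hlev w = l & connect (treeRel l l (l + n)) x w.
Proof.
move=> hl; elim: n => [|n IH] x hx hn.
  by exists x; [rewrite hx addn0 | exact: connect0].
have [hx1 hx2] := vbound x.
have hP := P2_down (l:=l) (i := l + n) ltac:(lia) ltac:(lia).
rewrite hx addnS in hx2.
have [p [hp1 hp2]] := mkv (l:=l) (i := l + n) (j := 2 * hidx x) ltac:(lia) ltac:(lia).
have step : treeRel l l (l + n.+1) x p.
  apply/andP; split.
    by apply/(Hadj_E _ _ hl); rewrite hp1 hp2 hx; right; left; split; [lia| right; lia].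
  rewrite /= hp1 hx; lia.
have [w hw cw] := IH p hp1 ltac:(lia).
exists w => //; apply: connect_trans (connect1 step) _.
apply: (@tree_mono l l (l + n)); [lia|lia|done].
Qed.

Lemma asc l n : 1 <= l -> forall x : Hvtx l, hlev x + n = l ->
  exists2 w : Hvtx l, hlev w = l & connect (treeRel l (hlev x) l) x w.
Proof.
move=> hl; elim: n => [|n IH] x hx.
  by exists x; [rewrite addn0 in hx | exact: connect0].
have [hx1 hx2] := vbound x.
have hP := P2_up (l:=l) (i := hlev x) ltac:(lia).
have [p [hp1 hp2]] := mkv (l:=l) (i := (hlev x).+1) (j := 2 * hidx x) ltac:(lia) ltac:(lia).
have step : treeRel l (hlev x) l x p.
  apply/andP; split.
    by apply/(Hadj_E _ _ hl); rewrite hp1 hp2; left; split; [lia| left; lia].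
  rewrite /= hp1; lia.
have [w hw cw] := IH p ltac:(lia).
exists w => //; apply: connect_trans (connect1 step) _.
apply: (@tree_mono l (hlev p) l); [lia|lia|done].
Qed.

Lemma excl l lo hi (a b : Hvtx l) :
  ~ (lo <= hlev a <= hi /\ lo <= hlev b <= hi /\ (hlev a = (hlev b).+1 \/ hlev b = (hlev a).+1)) ->
  forall x y, connect (treeRel l lo hi) x y -> connect (remove_edge (@Hadj l) a b) x y.
Proof.
move=> H; apply: conn_mono => u v /andP[Huv /and5P[h1 h2 h3 h4 h5]].
rewrite /remove_edge /= Huv /=; apply/negP => /orP[/andP[/eqP eu /eqP ev]|/andP[/eqP eu /eqP ev]];
  subst; apply: H; lia.
Qed.

Lemma rem_sym l (a b : Hvtx l) : symmetric (remove_edge (@Hadj l) a b).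
Proof.
move=> x y; rewrite /remove_edge /= Hadj_sym; congr andb.
by case: (x == a); case: (y == b); case: (x == b); case: (y == a).
Qed.

Lemma rem_swap l (a b : Hvtx l) : remove_edge (@Hadj l) a b =2 remove_edge (@Hadj l) b a.
Proof.
move=> x y; rewrite /remove_edge /=; congr andb.
by case: (x == a); case: (y == b); case: (x == b); case: (y == a).
Qed.

Lemma rem_csym l (a b : Hvtx l) x y :
  connect (remove_edge (@Hadj l) a b) x y -> connect (remove_edge (@Hadj l) a b) y x.
Proof. by rewrite (sym_connect_sym (@rem_sym l a b)). Qed.

Lemma idx0 l (x : Hvtx l) : hlev x = 0 -> hidx x = 0.
Proof. by move=> hx; have [_ ] := vbound x; rewrite hx P2_0; lia. Qed.

Lemma idxtop l (x : Hvtx l) : hlev x = 2 * l -> hidx x = 0.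
Proof. by move=> hx; have [_ ] := vbound x; rewrite hx P2_top; lia. Qed.

Lemma HadjBT l (B T : Hvtx l) : 1 <= l -> hlev B = 0 -> hlev T = 2 * l -> Hadj B T.
Proof.
move=> hl hB hT; apply/(Hadj_E _ _ hl).
rewrite hB hT (idx0 hB) (idxtop hT); do 4 right; done.
Qed.

Lemma root_step l (a b B T : Hvtx l) : 1 <= l -> hlev B = 0 -> hlev T = 2 * l ->
  (hlev a = (hlev b).+1 \/ hlev b = (hlev a).+1) -> remove_edge (@Hadj l) a b B T.
Proof.
move=> hl hB hT hab; rewrite /remove_edge /= HadjBT //=.
apply/negP => /orP[/andP[/eqP eu /eqP ev]|/andP[/eqP eu /eqP ev]]; subst; lia.
Qed.

Lemma exTB l : 1 <= l -> exists (T B : Hvtx l), hlev T = 2 * l /\ hlev B = 0.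
Proof.
move=> hl.
have [T [h1 _]] := mkv (l:=l) (i := 2 * l) (j := 0) (leqnn _) ltac:(rewrite P2_top; lia).
have [B [h2 _]] := mkv (l:=l) (i := 0) (j := 0) ltac:(lia) ltac:(rewrite P2_0; lia).
by exists T, B.
Qed.

Lemma treeCase l (c p : Hvtx l) : 1 <= l -> hlev p = (hlev c).+1 ->
  connect (remove_edge (@Hadj l) c p) c p.
Proof.
move=> hl hp.
have [T [B [hT hB]]] := exTB hl.
have [hc1 _] := vbound c; have [hp1 _] := vbound p.
have rs : remove_edge (@Hadj l) c p B T by apply: root_step => //; right.
case: (ltnP (hlev c) l) => hcl.
- have [w hw cpw] := asc (n := l - hlev p) hl (x := p) ltac:(lia).
  have cwT := up (n := l) hl (x := w) (y := T) ltac:(lia) ltac:(lia) hT.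
  have ccB := down (n := hlev c) hl (x := c) (y := B) erefl ltac:(lia) hB.
  apply: connect_trans (excl _ ccB) _; first lia.
  apply: connect_trans (connect1 rs) _.
  apply: connect_trans (rem_csym (excl _ cwT)) _; first lia.
  apply: (rem_csym (excl _ cpw)); lia.
- have [w hw cw] := desc (n := hlev c - l) hl (x := c) ltac:(lia) ltac:(lia).
  have cwB := down (n := l) hl (x := w) (y := B) hw (leqnn _) hB.
  have cpT := up (n := 2 * l - hlev p) hl (x := p) (y := T) ltac:(lia) ltac:(lia) hT.
  apply: connect_trans (excl _ cw) _; first lia.
  apply: connect_trans (excl _ cwB) _; first lia.
  apply: connect_trans (connect1 rs) _.
  apply: (rem_csym (excl _ cpT)); lia.
Qed.

Lemma swapCase l (a b : Hvtx l) : connect (remove_edge (@Hadj l) b a) b a ->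
  connect (remove_edge (@Hadj l) a b) a b.
Proof.
move=> h; apply: rem_csym; rewrite (eq_connect (@rem_swap l a b)); exact: h.
Qed.

Lemma rootCase l (a b : Hvtx l) : 1 <= l -> hlev a = 2 * l -> hlev b = 0 ->
  connect (remove_edge (@Hadj l) a b) a b.
Proof.
move=> hl ha hb.
have [w hw cw] := desc (n := l) hl (x := a) ltac:(lia) (leqnn _).
have cwb := down (n := l) hl (x := w) (y := b) hw (leqnn _) hb.
apply: connect_trans (excl _ cw) _; first lia.
apply: (excl _ cwb); lia.
Qed.

Lemma cyc l (a b : Hvtx l) : 1 <= l -> Hadj a b -> connect (remove_edge (@Hadj l) a b) a b.
Proof.
move=> hl H; have := (Hadj_E _ _ hl).1 H.
case=> [[e _]|[[e _]|[[ea [eb [ediv ne]]]|[[ea [eb _]]|[ea [eb _]]]]]].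
- exact: treeCase.
- by apply: swapCase; apply: treeCase.
- have [ha1 ha2] := vbound a.
  have hP := P2_down (l:=l) (i := l) (leqnn _) ltac:(lia).
  rewrite ea hP in ha2.
  have [q [hq1 hq2]] := mkv (l:=l) (i := l.+1) (j := hidx a %/ 2) ltac:(lia) ltac:(lia).
  have s1 : remove_edge (@Hadj l) a b a q.
    rewrite /remove_edge /=.
    have -> : Hadj a q by apply/(Hadj_E _ _ hl); rewrite ea hq1 hq2; left; split => //; right; lia.
    apply/negP => /orP[/andP[_ /eqP ev]|/andP[_ /eqP ev]]; subst; lia.
  have s2 : remove_edge (@Hadj l) a b q b.
    rewrite /remove_edge /=.
    have -> : Hadj q b.
      rewrite Hadj_sym; apply/(Hadj_E _ _ hl); rewrite eb hq1 hq2; left; split => //; right; lia.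
    apply/negP => /orP[/andP[/eqP ev _]|/andP[/eqP ev _]]; subst; lia.
  exact: connect_trans (connect1 s1) (connect1 s2).
- exact: rootCase.
- by apply: swapCase; apply: rootCase.
Qed.

Lemma connH l : 1 <= l -> connectedg (@Hadj l).
Proof.
move=> hl.
have [T [B [hT hB]]] := exTB hl.
have toT : forall x, connect (@Hadj l) x T.
  move=> x; have [hx _] := vbound x.
  have sub : forall lo hi u v, connect (treeRel l lo hi) u v -> connect (@Hadj l) u v.
    by move=> lo hi; apply: conn_mono => u v /andP[].
  case: (leqP l (hlev x)) => h.
  - exact: sub _ _ _ _ (up (n := 2 * l - hlev x) hl (x := x) (y := T) ltac:(lia) h hT).
  - apply: connect_trans (sub _ _ _ _ (down (n := hlev x) hl (x := x) (y := B) erefl ltac:(lia) hB)) _.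
    by apply: connect1; apply: HadjBT.
move=> x y; apply: connect_trans (toT x) _.
by rewrite (sym_connect_sym (@Hadj_sym l)).
Qed.

Lemma two_ecH l : 1 <= l -> 1 < #|{: Hvtx l}| -> two_edge_connected (@Hadj l).
Proof.
move=> hl hc; split => //; split; first exact: connH.
move=> a b hab x y.
apply: (connect_sub (e := @Hadj l)); last exact: connH.
move=> u v huv.
case E: ((u == a) && (v == b) || (u == b) && (v == a)).
- case/orP: E => /andP[/eqP -> /eqP ->]; first exact: cyc.
  exact: rem_csym (cyc hl hab).
- by apply: connect1; rewrite /remove_edge /= huv E.
Qed.

Local Open Scope R_scope.

Definition Xc l (x : Hvtx l) : R :=
  if ((0 < hlev x) && (hlev x < 2 * l))%N then INR (hidx x) + 1 else 0.
Definition Yc l (x : Hvtx l) : R := INR (hlev x).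
Definition posH l (x : Hvtx l) : point := (Xc x, Yc x).
Definition arcH l (x y : Hvtx l) (t : R) : point :=
  (Xc x + t * (Xc y - Xc x), Yc x + t * (Yc y - Yc x)).

Lemma arc_rev l (x y : Hvtx l) t : arcH y x t = arcH x y (1 - t).
Proof. rewrite /arcH; f_equal; ring. Qed.

Lemma X_nonroot l (x : Hvtx l) : (0 < hlev x)%N -> (hlev x < 2 * l)%N -> Xc x = INR (hidx x) + 1.
Proof. by move=> h1 h2; rewrite /Xc h1 h2. Qed.

Lemma X_root l (x : Hvtx l) : (hlev x = 0)%N \/ (hlev x = 2 * l)%N -> Xc x = 0.
Proof. by rewrite /Xc => -[]->; rewrite ?ltnn ?andbF. Qed.

Lemma X_ge0 l (x : Hvtx l) : 0 <= Xc x.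
Proof. rewrite /Xc; case: ifP => _; last lra. have := pos_INR (hidx x); lra. Qed.

Lemma X_mono_lt l (a b : Hvtx l) : hlev a = hlev b -> (hidx a < hidx b)%N -> Xc a < Xc b.
Proof.
move=> e h; have [ha _] := vbound a.
case: (boolP ((0 < hlev a) && (hlev a < 2 * l))%N) => /andP.
- case=> h1 h2; rewrite !X_nonroot -?e //.
  have : INR (hidx a) < INR (hidx b) by apply: lt_INR; lia.
  lra.
- move=> hn; exfalso.
  have hr : (hlev a = 0 \/ hlev a = 2 * l)%N by lia.
  case: hr => hr.
  + have := idx0 hr; have := idx0 (etrans (esym e) hr); lia.
  + have := idxtop hr; have := idxtop (etrans (esym e) hr); lia.
Qed.

Lemma X_mono_le l (a b : Hvtx l) : hlev a = hlev b -> (hidx a <= hidx b)%N -> Xc a <= Xc b.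
Proof.
move=> e; rewrite leq_eqVlt => /orP[/eqP h|h].
- by rewrite (vtx_eq e h); lra.
- by apply: Rlt_le; apply: X_mono_lt.
Qed.

Lemma no_between n k : INR n < INR k -> INR k < INR n.+1 -> False.
Proof. move=> /INR_lt h1 /INR_lt h2; lia. Qed.

Lemma posH_inj l : injective (@posH l).
Proof.
move=> x y [hX hY].
have el : hlev x = hlev y by apply: INR_eq.
apply: vtx_eq => //.
have [hx _] := vbound x.
case: (boolP ((0 < hlev x) && (hlev x < 2 * l))%N) => /andP.
- case=> h1 h2; rewrite !X_nonroot -?el // in hX.
  apply: INR_eq; lra.
- move=> hn; have hr : (hlev x = 0 \/ hlev x = 2 * l)%N by lia.
  case: hr => hr.
  + by rewrite (idx0 hr) (idx0 (etrans (esym el) hr)).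
  + by rewrite (idxtop hr) (idxtop (etrans (esym el) hr)).
Qed.

Definition OT l (x y : Hvtx l) : Prop := (hlev y = (hlev x).+1 /\
  (((hlev x < l)%N /\ hidx x = hidx y %/ 2) \/ ((l <= hlev x)%N /\ hidx y = hidx x %/ 2)))%N.
Definition OL l (x y : Hvtx l) : Prop :=
  (hlev x = l /\ hlev y = l /\ hidx x %/ 2 = hidx y %/ 2 /\ hidx x <> hidx y)%N.
Definition OR l (x y : Hvtx l) : Prop := (hlev x = 2 * l /\ hlev y = 0)%N.
Definition OE l (x y : Hvtx l) : Prop := OT x y \/ OL x y \/ OR x y.

Lemma Hadj_OE l (x y : Hvtx l) : (1 <= l)%N -> Hadj x y -> OE x y \/ OE y x.
Proof.
move=> hl /(Hadj_E _ _ hl).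
case=> [[e H]|[[e H]|[[ea [eb [ediv ne]]]|[[ea [eb _]]|[ea [eb _]]]]]].
- by left; left.
- by right; left; split.
- by left; right; left.
- by left; right; right.
- by right; right; right.
Qed.

Lemma Hadj_irr l (x : Hvtx l) : (1 <= l)%N -> ~~ Hadj x x.
Proof.
move=> hl; apply/negP => /(Hadj_E _ _ hl).
case=> [[e H]|[[e H]|[[ea [eb [ediv ne]]]|[[ea [eb _]]|[ea [eb _]]]]]]; lia.
Qed.

Lemma arcT l (x y : Hvtx l) s : (1 <= l)%N -> OT x y -> 0 < s < 1 ->
  snd (arcH x y s) = INR (hlev x) + s /\ 0 < fst (arcH x y s).
Proof.
move=> hl [e _] hs; rewrite /arcH /= /Yc e S_INR; split; first ring.
have [hy _] := vbound y.
have h0x := X_ge0 x; have h0y := X_ge0 y.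
case: (boolP (0 < hlev x)%N) => hx0.
- have -> : Xc x = INR (hidx x) + 1 by apply: X_nonroot; lia.
  have := pos_INR (hidx x); nra.
- have -> : Xc y = INR (hidx y) + 1 by apply: X_nonroot; lia.
  have := pos_INR (hidx y); nra.
Qed.

Lemma INR2 a b : a = (2 * b)%N -> INR a = 2 * INR b.
Proof. move=> ->; rewrite -multE mult_INR /=; ring. Qed.

Lemma INR2S a b : a = (2 * b + 1)%N -> INR a = 2 * INR b + 1.
Proof. move=> ->; rewrite -plusE -multE plus_INR mult_INR /=; ring. Qed.

Lemma arcL l (x y : Hvtx l) s : (1 <= l)%N -> OL x y -> 0 < s < 1 ->
  snd (arcH x y s) = INR l /\ 2 * INR (hidx x %/ 2) + 1 < fst (arcH x y s) < 2 * INR (hidx x %/ 2) + 2.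
Proof.
move=> hl [ex [ey [ed ne]]] hs; rewrite /arcH /= /Yc ex ey; split; first ring.
rewrite !X_nonroot ?ex ?ey; try lia.
have [[h1 h2]|[h1 h2]] : (hidx x = 2 * (hidx x %/ 2) /\ hidx y = 2 * (hidx x %/ 2) + 1)%N \/
               (hidx y = 2 * (hidx x %/ 2) /\ hidx x = 2 * (hidx x %/ 2) + 1)%N by lia.
- rewrite (INR2 h1) (INR2S h2); nra.
- rewrite (INR2 h1) (INR2S h2); nra.
Qed.

Lemma arcR l (x y : Hvtx l) s : (1 <= l)%N -> OR x y -> 0 < s < 1 ->
  fst (arcH x y s) = 0 /\ 0 < snd (arcH x y s) < INR (2 * l).
Proof.
move=> hl [ex ey] hs; rewrite /arcH /= /Yc ex ey !X_root; try by [left|right].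
have : INR 0 < INR (2 * l) by apply: lt_INR; lia.
rewrite /=; split; [ring | nra].
Qed.

Definition Dsj l (x y u v : Hvtx l) : Prop := forall s t, 0 < s < 1 -> 0 < t < 1 ->
  arcH x y s = arcH u v t -> (x = u /\ y = v) \/ (x = v /\ y = u).

Lemma Dsj_rev l (x y u v : Hvtx l) : Dsj x y u v -> Dsj y x u v.
Proof.
move=> H s t hs ht; rewrite arc_rev => /H.
by case; [lra|done|move=> [-> ->]; right|move=> [-> ->]; left].
Qed.

Lemma Dsj_sym l (x y u v : Hvtx l) : Dsj x y u v -> Dsj u v x y.
Proof.
move=> H s t hs ht e; have := H t s ht hs (esym e).
by case=> -[-> ->]; [left|right].
Qed.

Lemma strip_eq m m' (Y : R) : INR m < Y < INR m.+1 -> INR m' < Y < INR m'.+1 -> m = m'.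
Proof.
move=> [h1 h2] [h3 h4].
have a : INR m < INR m'.+1 by lra.
have b : INR m' < INR m.+1 by lra.
move/INR_lt: a; move/INR_lt: b; lia.
Qed.

Lemma Dsj_TT l (x y u v : Hvtx l) : (1 <= l)%N -> OT x y -> OT u v -> Dsj x y u v.
Proof.
move=> hl hxy huv s t hs ht e.
have [ys xs] := arcT hl hxy hs; have [yt xt] := arcT hl huv ht.
have ey : snd (arcH x y s) = snd (arcH u v t) by rewrite e.
have eY : INR (hlev x) + s = INR (hlev u) + t by rewrite -ys -yt ey.
have em : hlev x = hlev u.
  apply: (@strip_eq _ _ (INR (hlev x) + s)); rewrite ?S_INR; lra.
have est : s = t by rewrite em in eY; lra.
subst t.
have ex : fst (arcH x y s) = fst (arcH u v s) by rewrite e.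
move: ex; rewrite /arcH /= => ex.
case: hxy => ey1 hxy; case: huv => ev1 huv.
have eyv : hlev y = hlev v by rewrite ey1 ev1 em.
case: (ltnP (hlev x) l) => hm.
- have [ex1 eu1] : (hidx x = hidx y %/ 2 /\ hidx u = hidx v %/ 2)%N by lia.
  case: (ltngtP (hidx y) (hidx v)) => c.
  + have h1 := X_mono_lt eyv c.
    have h2 := X_mono_le em (_ : hidx x <= hidx u)%N; have h3 := h2 ltac:(lia). nra.
  + have h1 := X_mono_lt (esym eyv) c.
    have h2 := X_mono_le (esym em) (_ : hidx u <= hidx x)%N; have h3 := h2 ltac:(lia). nra.
  + left; split; apply: vtx_eq => //; lia.
- have [ex1 eu1] : (hidx y = hidx x %/ 2 /\ hidx v = hidx u %/ 2)%N by lia.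
  case: (ltngtP (hidx x) (hidx u)) => c.
  + have h1 := X_mono_lt em c.
    have h2 := X_mono_le eyv (_ : hidx y <= hidx v)%N; have h3 := h2 ltac:(lia). nra.
  + have h1 := X_mono_lt (esym em) c.
    have h2 := X_mono_le (esym eyv) (_ : hidx v <= hidx y)%N; have h3 := h2 ltac:(lia). nra.
  + left; split; apply: vtx_eq => //; lia.
Qed.

Lemma Dsj_TL l (x y u v : Hvtx l) : (1 <= l)%N -> OT x y -> OL u v -> Dsj x y u v.
Proof.
move=> hl hxy huv s t hs ht e; exfalso.
have [ys _] := arcT hl hxy hs; have [yt _] := arcL hl huv ht.
rewrite e yt in ys.
apply: (@no_between (hlev x) l); rewrite ?ys ?S_INR; lra.
Qed.

Lemma Dsj_TR l (x y u v : Hvtx l) : (1 <= l)%N -> OT x y -> OR u v -> Dsj x y u v.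
Proof.
move=> hl hxy huv s t hs ht e; exfalso.
have [_ xs] := arcT hl hxy hs; have [xt _] := arcR hl huv ht.
rewrite e xt in xs; lra.
Qed.

Lemma Dsj_LR l (x y u v : Hvtx l) : (1 <= l)%N -> OL x y -> OR u v -> Dsj x y u v.
Proof.
move=> hl hxy huv s t hs ht e; exfalso.
have [_ xs] := arcL hl hxy hs; have [xt _] := arcR hl huv ht.
rewrite e xt in xs; have := pos_INR (hidx x %/ 2); lra.
Qed.

Lemma Dsj_RR l (x y u v : Hvtx l) : (1 <= l)%N -> OR x y -> OR u v -> Dsj x y u v.
Proof.
move=> hl [h1 h2] [h3 h4] s t hs ht e; left; split.
- exact: levtop.
- exact: lev0.
Qed.

Lemma Dsj_LL l (x y u v : Hvtx l) : (1 <= l)%N -> OL x y -> OL u v -> Dsj x y u v.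
Proof.
move=> hl hxy huv s t hs ht e.
have [_ xs] := arcL hl hxy hs; have [_ xt] := arcL hl huv ht.
rewrite e in xs.
have ek : (hidx x %/ 2 = hidx u %/ 2)%N.
  have a : INR (2 * (hidx x %/ 2)) < INR (2 * (hidx u %/ 2) + 1).
    rewrite (INR2 (erefl _)) (INR2S (erefl _)); lra.
  have b : INR (2 * (hidx u %/ 2)) < INR (2 * (hidx x %/ 2) + 1).
    rewrite (INR2 (erefl _)) (INR2S (erefl _)); lra.
  move/INR_lt: a; move/INR_lt: b; lia.
case: hxy => [ex [ey [exy nxy]]]; case: huv => [eu [ev [euv nuv]]].
case: (eqVneq (hidx x) (hidx u)) => c.
- left; split; apply: vtx_eq; try congruence; lia.
- right; split; apply: vtx_eq; try congruence; lia.
Qed.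

Lemma Dsj_OE l (x y u v : Hvtx l) : (1 <= l)%N -> OE x y -> OE u v -> Dsj x y u v.
Proof.
move=> hl [h1|[h1|h1]] [h2|[h2|h2]].
- exact: Dsj_TT.
- exact: Dsj_TL.
- exact: Dsj_TR.
- exact: Dsj_sym (Dsj_TL hl h2 h1).
- exact: Dsj_LL.
- exact: Dsj_LR.
- exact: Dsj_sym (Dsj_TR hl h2 h1).
- exact: Dsj_sym (Dsj_LR hl h2 h1).
- exact: Dsj_RR.
Qed.

Lemma Dsj_adj l (x y u v : Hvtx l) : (1 <= l)%N -> Hadj x y -> Hadj u v -> Dsj x y u v.
Proof.
move=> hl h1 h2.
case: (Hadj_OE hl h1) => o1; case: (Hadj_OE hl h2) => o2.
- exact: Dsj_OE.
- exact: Dsj_sym (Dsj_rev (Dsj_sym (Dsj_OE hl o1 o2))).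
- exact: Dsj_rev (Dsj_OE hl o1 o2).
- exact: Dsj_rev (Dsj_sym (Dsj_rev (Dsj_sym (Dsj_OE hl o1 o2)))).
Qed.

Lemma avoid_OE l (x y z : Hvtx l) t : (1 <= l)%N -> OE x y -> 0 < t < 1 -> arcH x y t <> posH z.
Proof.
move=> hl [h|[h|h]] ht e.
- have [ys _] := arcT hl h ht.
  have : snd (arcH x y t) = Yc z by rewrite e.
  rewrite ys /Yc => ez.
  apply: (@no_between (hlev x) (hlev z)); rewrite -ez ?S_INR; lra.
- have [ys xs] := arcL hl h ht.
  have ey : snd (arcH x y t) = Yc z by rewrite e.
  have ex : fst (arcH x y t) = Xc z by rewrite e.
  rewrite ys /Yc in ey; have ez := INR_eq _ _ ey.
  rewrite X_nonroot -?ez in ex; try lia.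
  rewrite ex in xs.
  apply: (@no_between (2 * (hidx x %/ 2)) (hidx z)).
  + rewrite (INR2 (erefl _)); lra.
  + rewrite -addn1 (INR2S (erefl _)); lra.
- have [xs ys] := arcR hl h ht.
  have ey : snd (arcH x y t) = Yc z by rewrite e.
  have ex : fst (arcH x y t) = Xc z by rewrite e.
  rewrite xs in ex; rewrite ey /Yc in ys.
  have [hz _] := vbound z.
  case: (boolP ((0 < hlev z) && (hlev z < 2 * l))%N) => /andP.
  + case=> h1 h2; rewrite X_nonroot // in ex; have := pos_INR (hidx z); lra.
  + move=> hn; have [hr|hr] : (hlev z = 0 \/ hlev z = 2 * l)%N by lia.
    * rewrite hr /= in ys; lra.
    * rewrite hr in ys; lra.
Qed.

Lemma avoid_adj l (x y z : Hvtx l) t : (1 <= l)%N -> Hadj x y -> 0 < t < 1 -> arcH x y t <> posH z.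
Proof.
move=> hl h ht; case: (Hadj_OE hl h) => o.
- exact: avoid_OE.
- have -> : arcH x y t = arcH y x (1 - t) by rewrite arc_rev; congr arcH; ring.
  apply: avoid_OE => //; lra.
Qed.

Lemma lin_close (b d e : R) : 0 < e -> Rabs d < e / (Rabs b + 1) -> Rabs (d * b) < e.
Proof.
move=> he hd; rewrite Rabs_mult.
have hb := Rabs_pos b; have hd0 := Rabs_pos d.
set q := e / (Rabs b + 1) in hd.
have hq : q * (Rabs b + 1) = e by rewrite /q; field; lra.
nra.
Qed.

Lemma jordanH l (x y : Hvtx l) : posH x <> posH y -> jordan_arc (arcH x y).
Proof.
move=> hne; split.
- move=> t _ eps he.
  set dX := Xc y - Xc x; set dY := Yc y - Yc x.
  have p1 : 0 < eps / (Rabs dX + 1) by apply: Rdiv_lt_0_compat; have := Rabs_pos dX; lra.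
  have p2 : 0 < eps / (Rabs dY + 1) by apply: Rdiv_lt_0_compat; have := Rabs_pos dY; lra.
  exists (Rmin (eps / (Rabs dX + 1)) (eps / (Rabs dY + 1))); split.
    by apply: Rmin_glb_lt.
  move=> s _ hs; rewrite /arcH /=; split.
  + have -> : Xc x + s * dX - (Xc x + t * dX) = (s - t) * dX by ring.
    apply: lin_close => //; apply: Rlt_le_trans hs _; exact: Rmin_l.
  + have -> : Yc x + s * dY - (Yc x + t * dY) = (s - t) * dY by ring.
    apply: lin_close => //; apply: Rlt_le_trans hs _; exact: Rmin_r.
- move=> s t _ _ [e1 e2].
  case: (Req_dec s t) => // hst; exfalso; apply: hne.
  have a : (s - t) * (Xc y - Xc x) = 0 by lra.
  have b : (s - t) * (Yc y - Yc x) = 0 by lra.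
  case: (Rmult_integral _ _ a) => a'; first lra.
  case: (Rmult_integral _ _ b) => b'; first lra.
  rewrite /posH; f_equal; lra.
Qed.

Lemma planarH l : (1 <= l)%N -> planar (@Hadj l).
Proof.
move=> hl; exists (@posH l), (@arcH l); split; first exact: posH_inj.
split.
  move=> x y hxy; split.
  - apply: jordanH => /posH_inj exy; subst y.
    by have := Hadj_irr x hl; rewrite hxy.
  - by rewrite /arcH /posH; split; f_equal; ring.
split.
  move=> x y z t hxy ht; apply: avoid_adj => //; lra.
move=> x y u v s t hxy huv hne hs ht e.
apply: hne; apply: (Dsj_adj hl hxy huv) e; lra.
Qed.

Local Close Scope R_scope.
Unset Implicit Arguments.

Theorem lemma1 (l : nat) : 1 <= l ->
  cubic (@Hadj l) /\ planar (@Hadj l) /\ two_edge_connected (@Hadj l) /\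
  #|{: Hvtx l}| = 2 ^ l.+1 + 2 ^ l - 2.
Proof.
move=> hl.
have hc := cardH hl.
split; first exact: cubicH.
split; first exact: planarH.
split; last exact: hc.
apply: two_ecH => //.
rewrite hc expnS.
have : 2 ^ 1 <= 2 ^ l by apply: leq_pexp2l.
lia.
Qed.
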